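(* Let $\mathcal{L}$ be a countable collection of languages containing two distinct languages $L_i,L_j$ with $|L_i\cap L_j|=\infty$ and $|L_i\setminus L_j|<\infty$. Then for every $\varepsilon>0$, no online randomized identification algorithm that is $\varepsilon$-DP in the continual release model identifies $\mathcal{L}$ in the limit.
   Context: $\mathcal{X}$ is a countable universe; a language is an infinite subset of $\mathcal{X}$; $\mathcal{L}=\{L_1,L_2,\dots\}$ is a countable collection known to the algorithm. An enumeration of $K$ is an infinite sequence $x_1,x_2,\dots$ of elements of $K$ (repetitions allowed) in which every element of $K$ appears. An online randomized identification algorithm, after seeing $x_{1:n}$, outputs an index $i_n$ depending only on $x_{1:n}$ and internal randomness (no computability constraints). It identifies $\mathcal{L}$ in the limit if for every $K\in\mathcal{L}$ and every enumeration of $K$, with probability $1$ there exists $n^\star$ such that for all $n\ge n^\star$, $i_n=i_{n^\star}$ and $L_{i_n}=K$. Streams are neighboring if they differ at exactly one time step; the algorithm is $\varepsilon$-DP in the continual release model if for all neighboring input streams $x,x'$ and every measurable set $E$ of entire output sequences, $\Pr[(i_n)_n(x)\in E]\le e^\varepsilon\Pr[(i_n)_n(x')\in E]$. *)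

(* Defs.v *)
From HB Require Import structures.
From mathcomp Require Import all_boot all_order all_algebra.
From mathcomp Require Import all_classical all_reals all_analysis.
Set Implicit Arguments. Unset Strict Implicit. Unset Printing Implicit Defensive.
Import Order.TTheory GRing.Theory Num.Theory.
Local Open Scope classical_set_scope.
Local Open Scope ring_scope.

(* Streams are x : nat -> X, with x 0 = x_1, x 1 = x_2, ...
   The prefix x_{1:n} is the list [x 0; ...; x (n-1)]. *)
Definition prefix {X : Type} (x : nat -> X) (n : nat) : seq X := mkseq x n.

(* An online randomized algorithm: internal randomness omega in a probability
   space Omega; after seeing x_{1:n} (n >= 1) it outputs A x_{1:n} omega. *)
Definition output_seq {X Omega : Type} (A : seq X -> Omega -> nat)
  (x : nat -> X) (w : Omega) : nat -> nat :=
  fun n => A (prefix x n.+1) w.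

Definition cylinders : set (set (nat -> nat)) :=
  [set E | exists n k : nat, E = [set f : nat -> nat | f n = k]].

Definition outseq_measurable (E : set (nat -> nat)) : Prop :=
  <<s cylinders >> E.

Definition enumeration {X : Type} (K : set X) (x : nat -> X) : Prop :=
  (forall n, K (x n)) /\ (forall y, K y -> exists n, x n = y).

Definition neighboring {X : Type} (x x' : nat -> X) : Prop :=
  exists t, x t <> x' t /\ forall n, n <> t -> x n = x' n.

Definition continual_DP {X : Type} {R : realType} {d : measure_display}
  {Omega : measurableType d} (P : probability Omega R)
  (A : seq X -> Omega -> nat) (eps : R) : Prop :=
  forall (x x' : nat -> X), neighboring x x' ->
  forall E : set (nat -> nat), outseq_measurable E ->
    (P [set w | E (output_seq A x w)] <=
     (expR eps)%:E * P [set w | E (output_seq A x' w)])%E.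

Definition identifies_in_limit {X : Type} {R : realType} {d : measure_display}
  {Omega : measurableType d} (P : probability Omega R)
  (A : seq X -> Omega -> nat) (L : nat -> set X) : Prop :=
  forall k : nat, forall x : nat -> X, enumeration (L k) x ->
    P [set w | exists nstar : nat, forall n : nat, (nstar <= n)%N ->
         output_seq A x w n = output_seq A x w nstar /\
         L (output_seq A x w n) = L k] = 1%E.

(* Main.v *)
Require Import Defs.
From HB Require Import structures.
From mathcomp Require Import all_boot all_order all_algebra.
From mathcomp Require Import all_classical all_reals all_analysis.
From mathcomp Require Import lra zify.
Import Order.TTheory GRing.Theory Num.Theory.
Local Open Scope classical_set_scope.
Local Open Scope ring_scope.
Set Implicit Arguments. Unset Strict Implicit. Unset Printing Implicit Defensive.

Definition CT := g_sigma_algebraType cylinders.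

Lemma out_meas (X : Type) d (Omega : measurableType d) (A : seq X -> Omega -> nat)
  (hA : forall s, measurable_fun setT (A s)) (x : nat -> X) :
  measurable_fun setT (output_seq A x : Omega -> CT).
Proof.
apply: (@measurability _ _ _ CT _ _ cylinders) => //.
move=> B [C [n [k ->]] <-].
rewrite setTI.
have -> : (output_seq A x : Omega -> CT) @^-1` [set f | f n = k] = A (Defs.prefix x n.+1) @^-1` [set k].
  by apply/seteqP; split => w.
rewrite -[X in measurable X]setTI; exact: (hA _ measurableT [set k] I).
Qed.

Lemma ev_meas (X : Type) d (Omega : measurableType d) (A : seq X -> Omega -> nat)
  (hA : forall s, measurable_fun setT (A s)) (x : nat -> X) (E : set CT) :
  measurable E -> measurable [set w | E (output_seq A x w)].
Proof.
move=> mE; have := out_meas hA x measurableT mE; by rewrite setTI.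
Qed.

Lemma dp_zero (X : Type) (R : realType) d (Omega : measurableType d)
  (P : probability Omega R) (A : seq X -> Omega -> nat) (eps : R)
  (DP : continual_DP P A eps) (E : set (nat -> nat)) (mE : outseq_measurable E)
  (s : seq nat) : forall x x' : nat -> X, (forall n, n \notin s -> x n = x' n) ->
  P [set w | E (output_seq A x' w)] = 0%E -> P [set w | E (output_seq A x w)] = 0%E.
Proof.
elim: s => [|t s IH] x x' hx h0.
  by have -> : x = x' by apply/funext => n; exact: hx.
pose y := fun n => if n == t then x' n else x n.
have hy : forall n, n \notin s -> y n = x' n.
  move=> n ns; rewrite /y; case: eqP => // nt; apply: hx.
  by rewrite in_cons negb_or ns andbT; apply/eqP.
have := IH y x' hy h0 => Py0.
case: (pselect (x t = x' t)) => ht.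
  have -> : x = y by apply/funext => n; rewrite /y; case: eqP => // ->.
  exact: Py0.
have nb : neighboring x y.
  exists t; split; first by rewrite /y eqxx.
  by move=> n nt; rewrite /y; case: eqP.
have := DP _ _ nb _ mE; rewrite Py0 mule0 => le0.
by apply/eqP; rewrite eq_le le0 measure_ge0.
Qed.

Lemma half_lt (R : realType) d (Omega : measurableType d)
  (P : probability Omega R) (F : nat -> set Omega) :
  (forall n, measurable (F n)) -> nondecreasing_seq F ->
  P (\bigcup_n F n) = 1%E -> exists N, forall m, (N <= m)%N -> ((2^-1)%:E < P (F m))%E.
Proof.
move=> mF ndF h1.
have cv := @nondecreasing_cvg_mu _ _ _ P F mF (bigcupT_measurable F mF) ndF.
case: (pselect (exists N, ((2^-1)%:E < P (F N))%E)) => [[N hN]|hN].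
  exists N => m Nm; apply: (lt_le_trans hN); apply: le_measure => //; rewrite ?inE //.
  exact/subsetPset/ndF.
have : (P (\bigcup_n F n) <= (2^-1)%:E)%E.
  apply: (cvge_to_le cv); apply: nearW => n /=.
  by rewrite leNgt; apply/negP => hn; apply: hN; exists n.
rewrite h1 => h; have : (1 <= 2^-1 :> R) by rewrite -lee_fin. lra.
Qed.
Definition Sx (X : Type) (eI : nat -> X) (i0 : X) (h : nat -> option X) : nat -> X :=
  fun n => if odd n then odflt i0 (h n./2) else eI n./2.

Definition upd (X : Type) (h : nat -> option X) (N : nat) (v : option X) : nat -> option X :=
  fun m => if m == N then v else h m.

Fixpoint stage (X : Type) (ch : (nat -> option X) -> nat -> nat) (eo : nat -> option X)
  (k : nat) : (nat -> option X) * nat :=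
  match k with
  | 0 => (fun _ => None, 0%N)
  | k'.+1 => let p := stage ch eo k' in
             let N := ch p.1 p.2 in (upd p.1 N (eo k'), N)
  end.

Section Stage.
Context (X : Type) (ch : (nat -> option X) -> nat -> nat) (eo : nat -> option X)
  (hch : forall h T, (T < ch h T)%N).
Local Notation T k := (stage ch eo k).2.
Local Notation h k := (stage ch eo k).1.

Lemma Tlt k : (T k < T k.+1)%N.
Proof. exact: hch. Qed.

Lemma Tge k : (k <= T k)%N.
Proof. elim: k => // k IH; exact: leq_ltn_trans IH (Tlt k). Qed.

Lemma Tmono k K : (k <= K)%N -> (T k <= T K)%N.
Proof.
elim: K => [|K IH]; first by rewrite leqn0 => /eqP ->.
rewrite leq_eqVlt => /orP [/eqP -> //|]; rewrite ltnS => /IH hk.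
exact: leq_trans hk (ltnW (Tlt K)).
Qed.

Lemma supp k m : (T k < m)%N -> h k m = None.
Proof.
elim: k m => // k IH m hm /=; rewrite /upd.
have := hm; rewrite /= => hm'.
case: eqP => [e|_]; first by move: hm'; rewrite e ltnn.
apply: IH; exact: ltn_trans (Tlt k) hm'.
Qed.

Lemma stab k K m : (k <= K)%N -> (m <= T k)%N -> h K m = h k m.
Proof.
elim: K => [|K IH]; first by rewrite leqn0 => /eqP ->.
rewrite leq_eqVlt => /orP [/eqP -> //|]; rewrite ltnS => hk hm.
rewrite /= /upd; case: eqP => [e|_]; last exact: IH.
have := Tmono hk; have := Tlt K; rewrite /= -e => h1 h2.
by have := leq_trans hm h2; rewrite leqNgt h1.
Qed.

Lemma hslot k : h k.+1 (T k.+1) = eo k.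
Proof. by rewrite /= /upd eqxx. Qed.

Lemma hsome k m y : h k m = Some y -> exists k', eo k' = Some y.
Proof.
elim: k => // k IH /=; rewrite /upd; case: eqP => _; last exact: IH.
by move=> e; exists k.
Qed.

Lemma hw_eq k m : (m <= T k)%N -> h m m = h k m.
Proof.
move=> hm; case: (leqP m k) => mk.
  rewrite (stab mk) //; exact: Tge.
exact: stab (ltnW mk) hm.
Qed.
End Stage.
Lemma cyl_meas n k : measurable ([set f : nat -> nat | f n = k] : set CT).
Proof. by apply: sub_sigma_algebra; exists n, k. Qed.

Lemma coord_meas n (Q : nat -> Prop) : measurable ([set f : nat -> nat | Q (f n)] : set CT).
Proof.
have -> : ([set f : nat -> nat | Q (f n)] : set CT) = \bigcup_(k in Q) [set f : nat -> nat | f n = k].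
  apply/seteqP; split => f /=; first by move=> hf; exists (f n).
  by move=> [k Qk ->].
by apply: bigcup_measurable => k _; exact: cyl_meas.
Qed.

Lemma eq2_meas n m : measurable ([set f : nat -> nat | f n = f m] : set CT).
Proof.
have -> : ([set f : nat -> nat | f n = f m] : set CT) =
   \bigcup_k ([set f : nat -> nat | f n = k] `&` [set f : nat -> nat | f m = k]).
  apply/seteqP; split => f /=; first by move=> hf; exists (f n) => //.
  by move=> [k _ [-> ->]].
by apply: bigcupT_measurable => k; apply: measurableI; exact: cyl_meas.
Qed.

Lemma const_meas (p : Prop) : measurable ([set _ : nat -> nat | p] : set CT).
Proof.
case: (pselect p) => hp.
  have -> : ([set _ : nat -> nat | p] : set CT) = setT by apply/seteqP; split.
  exact: measurableT.
have -> : ([set _ : nat -> nat | p] : set CT) = set0 by apply/seteqP; split.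
exact: measurable0.
Qed.

Definition stabE {Y : Type} (L : nat -> set Y) (k : nat) : set (nat -> nat) :=
  [set f | exists nstar : nat, forall n : nat, (nstar <= n)%N ->
         f n = f nstar /\ L (f n) = L k].

Lemma stabE_meas {Y : Type} (L : nat -> set Y) k : measurable (stabE L k : set CT).
Proof.
have -> : (stabE L k : set CT) = \bigcup_ns \bigcap_n
   ([set _ : nat -> nat | ~ (ns <= n)%N] `|`
    ([set f : nat -> nat | f n = f ns] `&` [set f : nat -> nat | L (f n) = L k])).
  apply/seteqP; split => f /=.
    move=> [ns h]; exists ns => // n _ /=.
    case: (pselect (ns <= n)%N) => hn; [right; exact: h|by left].
  move=> [ns _ h]; exists ns => n hn.
  by case: (h n I) => //.
apply: bigcupT_measurable => ns; apply: bigcapT_measurable => n.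
apply: measurableU; first exact: const_meas.
apply: measurableI; [exact: eq2_meas|exact: (coord_meas n (fun v => L v = L k))].
Qed.

Definition windowE {Y : Type} (L : nat -> set Y) (i T N : nat) : set (nat -> nat) :=
  [set f | exists n, (2 * T <= n < 2 * N)%N /\ L (f n) = L i].

Lemma windowE_meas {Y : Type} (L : nat -> set Y) i T N : measurable (windowE L i T N : set CT).
Proof.
have -> : (windowE L i T N : set CT) = \bigcup_n
   ([set _ : nat -> nat | (2 * T <= n < 2 * N)%N] `&` [set f : nat -> nat | L (f n) = L i]).
  apply/seteqP; split => f /=.
    by move=> [n [h1 h2]]; exists n.
  by move=> [n _ [h1 h2]]; exists n.
apply: bigcupT_measurable => n; apply: measurableI; first exact: const_meas.
exact: (coord_meas n (fun v => L v = L i)).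
Qed.

Definition ZE {Y : Type} (L : nat -> set Y) (i m : nat) : set (nat -> nat) :=
  [set f | forall n, (m <= n)%N -> L (f n) <> L i].

Lemma ZE_meas {Y : Type} (L : nat -> set Y) i m : measurable (ZE L i m : set CT).
Proof.
have -> : (ZE L i m : set CT) = \bigcap_n
   ([set _ : nat -> nat | ~ (m <= n)%N] `|` [set f : nat -> nat | L (f n) <> L i]).
  apply/seteqP; split => f /=.
    move=> h n _ /=; case: (pselect (m <= n)%N) => hn; [right; exact: h|by left].
  by move=> h n hn; case: (h n I).
apply: bigcapT_measurable => n; apply: measurableU; first exact: const_meas.
exact: (coord_meas n (fun v => L v <> L i)).
Qed.
Lemma Sx_even (X : Type) eI (i0 : X) h n : Sx eI i0 h n.*2 = eI n.
Proof. by rewrite /Sx odd_double doubleK. Qed.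

Lemma Sx_odd (X : Type) eI (i0 : X) h n : Sx eI i0 h n.*2.+1 = odflt i0 (h n).
Proof. by rewrite /Sx /= odd_double /= uphalf_double. Qed.

Lemma out_eq (X : Type) d (Omega : measurableType d) (A : seq X -> Omega -> nat)
  (x y : nat -> X) n : (forall p, (p <= n)%N -> x p = y p) ->
  forall w, output_seq A x w n = output_seq A y w n.
Proof.
move=> hxy w; rewrite /output_seq /Defs.prefix /mkseq.
congr (A _ w); apply/eq_in_map => p; rewrite mem_iota add0n ltnS => hp.
exact: hxy.
Qed.

Lemma surj_ex (X : countType) (S : set X) (a : X) : S a ->
  exists e : nat -> X, (forall n, S (e n)) /\ (forall y, S y -> e (pickle y) = y).
Proof.
move=> Sa.
exists (fun n => match unpickle n with Some y => if pselect (S y) then y else a | None => a end).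
split.
  by move=> n; case: (unpickle n) => // y; case: pselect.
by move=> y Sy; rewrite pickleK; case: pselect.
Qed.

Lemma opt_ex (X : countType) (S : set X) :
  exists e : nat -> option X, (forall n y, e n = Some y -> S y) /\
     (forall y, S y -> e (pickle y) = Some y).
Proof.
exists (fun n => match unpickle n with Some y => if pselect (S y) then Some y else None | None => None end).
split.
  by move=> n y; case: (unpickle n) => // z; case: pselect => // Sz [<-].
by move=> y Sy; rewrite pickleK; case: pselect.
Qed.

Theorem theorem1p4 (X : countType) (L : nat -> set X)
  (Linf : forall i, ~ finite_set (L i))
  (Hij : exists i j : nat, L i <> L j /\
           ~ finite_set (L i `&` L j) /\ finite_set (L i `\` L j))
  (R : realType) (eps : R) (heps : 0 < eps) :
  forall (d : measure_display) (Omega : measurableType d)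
         (P : probability Omega R) (A : seq X -> Omega -> nat),
    (forall s : seq X, measurable_fun setT (A s)) ->
    continual_DP P A eps ->
    ~ identifies_in_limit P A L.
Proof.
move=> d Omega P A hA DP Hid.
case: Hij => i [j [hneq [Iinf Ffin]]].
have [i0 Ii0] : exists i0, (L i `&` L j) i0.
  apply: contrapT => hn; apply: Iinf.
  have -> : L i `&` L j = set0 by apply/seteqP; split => // y hy; apply: hn; exists y.
  exact: finite_set0.
have [eI [eIin eIsurj]] := surj_ex Ii0.
have [eo [eoin eosurj]] := opt_ex (L j `\` L i).
have [s hs] := (finite_seqP _).1 Ffin.
pose hF := fun m => if (m < size s)%N then Some (nth i0 s m) else None.
pose b := Sx eI i0 hF.
have benum : enumeration (L i) b.
  split.
    move=> n; rewrite /b /Sx; case: odd; rewrite /hF.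
      case: ifP => hm /=; last by case: Ii0.
      have : (L i `\` L j) (nth i0 s n./2) by rewrite hs /=; exact: mem_nth.
      by case.
    by case: (eIin n./2).
  move=> y Ly; case: (pselect (L j y)) => Ljy.
    by exists (pickle y).*2; rewrite /b Sx_even; exact: eIsurj.
  have : (L i `\` L j) y by [].
  rewrite hs /= => ys.
  by exists (index y s).*2.+1; rewrite /b Sx_odd /hF index_mem ys /= nth_index.
have Hstab : forall k x, enumeration (L k) x ->
    P [set w | stabE L k (output_seq A x w)] = 1%E.
  by move=> k x hx; exact: Hid k x hx.
have mS y : measurable [set w | stabE L i (output_seq A y w)] :=
  ev_meas hA y (stabE_meas L i).
have transfer : forall x K, (forall n, (K <= n)%N -> x n = b n) ->
    P [set w | stabE L i (output_seq A x w)] = 1%E.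
  move=> x K hK.
  have h0 : P [set w | (~` stabE L i) (output_seq A x w)] = 0%E.
    have mC : outseq_measurable (~` stabE L i) := measurableC (stabE_meas L i).
    apply: (@dp_zero X R d Omega P A eps DP (~` stabE L i) mC (iota 0 K) x b).
    - move=> n; rewrite mem_iota /= add0n => hn; apply: hK.
      by move: hn; rewrite ltnNge negbK.
    change (P (~` [set w | stabE L i (output_seq A b w)]) = 0%E).
    by rewrite probability_setC ?mS // Hstab // subee.
  change (P (~` [set w | stabE L i (output_seq A x w)]) = 0%E) in h0.
  rewrite -[X in P X]setCK probability_setC; last exact: measurableC.
  by rewrite h0 sube0.

pose Q := fun (h : nat -> option X) (T N : nat) => (T < N)%N /\
  ((2^-1)%:E < P [set w | windowE L i T N (output_seq A (Sx eI i0 h) w)])%E.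
pose ch := fun h T => if pselect (exists N, Q h T N) then xget 0%N (Q h T) else T.+1.
have hch : forall h T, (T < ch h T)%N.
  move=> h T; rewrite /ch; case: pselect => // ex; by case: (xgetPex 0%N ex).
have exQ : forall k, exists N, Q (stage ch eo k).1 (stage ch eo k).2 N.
  move=> k.
  pose x := Sx eI i0 (stage ch eo k).1.
  have hx : P [set w | stabE L i (output_seq A x w)] = 1%E.
    apply: (transfer x (maxn (size s) (stage ch eo k).2.+1).*2) => n hn.
    rewrite /x /b /Sx; case hodd: (odd n) => //=.
    have hm : (maxn (size s) (stage ch eo k).2.+1 <= n./2)%N by rewrite geq_half_double.
    have h1 : (size s <= n./2)%N := leq_trans (leq_maxl _ _) hm.
    have h2 : ((stage ch eo k).2 < n./2)%N := leq_trans (leq_maxr _ _) hm.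
    by rewrite (supp hch h2) /hF ltnNge h1.
  pose W := fun N => [set w | windowE L i (stage ch eo k).2 N (output_seq A x w)].
  have mW N : measurable (W N) := ev_meas hA x (windowE_meas L i _ N).
  have ndW : nondecreasing_seq W.
    move=> N N' NN'; apply/subsetPset => w [n [/andP [h1 h2] h3]]; exists n; split=> //.
    apply/andP; split=> //; apply: leq_trans h2 _; by rewrite leq_mul2l NN' orbT.
  have hU : P (\bigcup_N W N) = 1%E.
    apply/eqP; rewrite eq_le probability_le1 ?bigcupT_measurable //=.
    rewrite -hx; apply: le_measure; rewrite ?inE; [exact: mS| exact: bigcupT_measurable|].
    move=> w [ns hns]; exists (maxn ns (2 * (stage ch eo k).2)%N).+1 => //.
    exists (maxn ns (2 * (stage ch eo k).2)%N); split; last by case: (hns (maxn ns (2 * (stage ch eo k).2)) (leq_maxl _ _)).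
    apply/andP; split; first exact: leq_maxr.
    lia.
  exact: bigcupT_measurable.
  have [N0 hN0] := half_lt mW ndW hU.
  exists (maxn N0 (stage ch eo k).2.+1); split; first exact: leq_maxr.
  exact: hN0 (leq_maxl _ _).
pose w := Sx eI i0 (fun m => (stage ch eo m).1 m).
have wenum : enumeration (L j) w.
  split.
    move=> n; rewrite /w /Sx; case: odd.
      case E: ((stage ch eo n./2).1 n./2) => [y|] /=; last by case: Ii0.
      have [k' hk'] := hsome E.
      by case: (eoin _ _ hk').
    by case: (eIin n./2).
  move=> y Ljy; case: (pselect (L i y)) => Liy.
    by exists (pickle y).*2; rewrite /w Sx_even; exact: eIsurj.
  exists (stage ch eo (pickle y).+1).2.*2.+1; rewrite /w Sx_odd.
  by rewrite (hw_eq hch (k := (pickle y).+1)) // hslot eosurj.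
have Wk : forall k, ((2^-1)%:E < P [set w' |
    windowE L i (stage ch eo k).2 (stage ch eo k.+1).2 (output_seq A w w')])%E.
  move=> k.
  have hQ : Q (stage ch eo k).1 (stage ch eo k).2 (stage ch eo k.+1).2.
    have -> : (stage ch eo k.+1).2 = ch (stage ch eo k).1 (stage ch eo k).2 by [].
    rewrite /ch; case: pselect => [ex|nex]; first exact: xgetPex ex.
    by exfalso; apply: nex; exact: exQ.
  have hpos : forall p, (p < 2 * (stage ch eo k.+1).2)%N ->
      w p = Sx eI i0 (stage ch eo k).1 p.
    move=> p hp; rewrite /w /Sx; case: odd => //.
    have hm : (p./2 < (stage ch eo k.+1).2)%N by rewrite ltn_half_double -mul2n.
    rewrite (hw_eq hch (k := k.+1) (ltnW hm)) /= /upd.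
    by rewrite ifN // ltn_eqF.
  have -> : [set w' | windowE L i (stage ch eo k).2 (stage ch eo k.+1).2 (output_seq A w w')]
      = [set w' | windowE L i (stage ch eo k).2 (stage ch eo k.+1).2
                   (output_seq A (Sx eI i0 (stage ch eo k).1) w')].
    apply/seteqP; split => w' [n [hn h]]; exists n; split=> //; rewrite -h; congr (L _).
      apply: esym; apply: out_eq => p hp; apply: hpos.
      by move: hn => /andP [_ h2]; exact: leq_ltn_trans hp h2.
    apply: out_eq => p hp; apply: hpos.
    by move: hn => /andP [_ h2]; exact: leq_ltn_trans hp h2.
  exact: hQ.2.
have hj := Hstab j w wenum.
pose Z := fun m => [set w' | ZE L i m (output_seq A w w')].
have mZ m : measurable (Z m) := ev_meas hA w (ZE_meas L i m).
have ndZ : nondecreasing_seq Z.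
  move=> m m' mm'; apply/subsetPset => w' hz n hn; exact: hz _ (leq_trans mm' hn).
have hZU : P (\bigcup_m Z m) = 1%E.
  apply/eqP; rewrite eq_le probability_le1 ?bigcupT_measurable //=.
  rewrite -hj; apply: le_measure; rewrite ?inE;
    [exact: (ev_meas hA w (stabE_meas L j))| exact: bigcupT_measurable|].
  move=> w' [ns hns]; exists ns => // n hn; case: (hns n hn) => _ -> e.
  exact: hneq (esym e).
  exact: bigcupT_measurable.
have [m0 hm0] := half_lt mZ ndZ hZU.
have hW := Wk m0.
have mWk : measurable [set w' |
    windowE L i (stage ch eo m0).2 (stage ch eo m0.+1).2 (output_seq A w w')] :=
  ev_meas hA w (windowE_meas L i _ _).
have disj : Z m0 `&` [set w' |
    windowE L i (stage ch eo m0).2 (stage ch eo m0.+1).2 (output_seq A w w')] = set0.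
  apply/seteqP; split => // w' [hz [n [/andP [h1 _] h2]]].
  apply: (hz n) => //.
  have := Tge eo hch m0; lia.
have hsum := measureU P (mZ m0) mWk disj.
have le1 := probability_le1 P (measurableU _ _ (mZ m0) mWk).
rewrite hsum in le1.
have h2 : ((2^-1 + 2^-1)%:E < P (Z m0) + P [set w' |
    windowE L i (stage ch eo m0).2 (stage ch eo m0.+1).2 (output_seq A w w')])%E.
  by rewrite EFinD; exact: lteD (hm0 _ (leqnn _)) hW.
have : (2^-1 + 2^-1 : R) = 1 by lra.
move=> e; rewrite e in h2.
by have := lt_le_trans h2 le1; rewrite ltxx.
Qed.
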